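(* Let $\theta_1,\dots,\theta_{10}$ be real numbers such that $0<\theta_i<\theta_j<\theta_k<180$ for each of the triples $(i,j,k)\in\{(2,4,6),(1,5,9),(1,5,10),(1,5,7),(1,3,7),(1,4,7),(3,5,8),(2,8,9),(6,7,10)\}$, and write $s_{ij}=\sin(\theta_j-\theta_i)$. Suppose $$s_{89}\,s_{1,10}\,s_{24}\,s_{35}\,s_{67}+s_{46}\,s_{19}\,s_{7,10}\,s_{35}\,s_{28}-s_{46}\,s_{38}\,s_{7,10}\,s_{29}\,s_{15}<0 .$$ Then the $9\times 8$ matrix $$S_9=\begin{pmatrix} 0&-s_{58}&0&s_{38}&0&-s_{35}&0&0\\ -s_{89}&0&0&0&0&s_{29}&-s_{28}&0\\ s_{46}&0&-s_{26}&0&s_{24}&0&0&0\\ 0&0&0&0&-s_{7,10}&0&0&-s_{67}\\ 0&s_{17}&0&0&0&0&0&0\\ 0&0&s_{17}&0&0&0&0&0\\ 0&0&0&-s_{19}&0&0&s_{15}&0\\ 0&0&0&-s_{1,10}&0&0&0&s_{15}\\ 0&0&0&-s_{17}&0&0&0&0 \end{pmatrix}$$ is a simplex.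
   Context: Angles are in degrees. A real matrix with $r+1$ rows and $r$ columns is called a simplex if, up to multiplication by a constant, there is precisely one positive linear dependency between its rows, i.e. there is a linear dependency among the rows with all coefficients strictly positive, and every linear dependency among the rows is a scalar multiple of it. (The columns of $S_9$ correspond to the unknowns $r_2,r_3,r_4,r_5,r_6,r_8,r_9,r_{10}$ in the triangle inequalities of a ten-line arrangement.) *)

(* Defs.v *)
From Stdlib Require Import Reals.
From mathcomp Require Import all_boot all_order all_algebra.
From mathcomp Require Import Rstruct.
Set Implicit Arguments. Unset Strict Implicit. Unset Printing Implicit Defensive.
Import GRing.Theory Num.Theory.

(* Angles in degrees: we use Stdlib's Rtrigo_calc.sind x = sin (x * PI / 180). *)

Local Open Scope ring_scope.

Definition simplex (r : nat) (S : 'M[R]_(r.+1, r)) : Prop :=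
  exists l : 'rV[R]_(r.+1),
    (forall i, 0 < l 0 i) /\ l *m S = 0 /\
    (forall m : 'rV[R]_(r.+1), m *m S = 0 -> exists c : R, m = c *: l).

Definition mx_of_rows (rows : seq (seq R)) : 'M[R]_(9, 8) :=
  \matrix_(i < 9, j < 8) nth 0 (nth [::] rows i) j.

(* Main.v *)
Require Import Defs.
From Stdlib Require Import Reals Lra.
From mathcomp Require Import all_boot all_order all_algebra.
From mathcomp Require Import Rstruct.
Import Order.TTheory GRing.Theory Num.Theory.
Local Open Scope ring_scope.

Section S0. Local Open Scope R_scope.
Lemma sind_pos0 (x : R) : 0 < x -> x < 180 -> 0 < Rtrigo_calc.sind x.
Proof.
intros H1 H2. unfold Rtrigo_calc.sind, Rtrigo_calc.toRad, Rtrigo_calc.plat.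
apply sin_gt_0.
- assert (HP := PI_RGT_0). apply Rmult_lt_0_compat; [apply Rmult_lt_0_compat|]; lra.
- assert (HP := PI_RGT_0). replace (x * PI * / 180) with ((x / 180) * PI) by (field; lra).
  assert (x / 180 < 1) by (apply (Rmult_lt_reg_r 180); [lra| field_simplify; lra]).
  nra.
Qed.
End S0.
From mathcomp Require Import ring lra.

Lemma sp (a b : R) : a < b -> b - a < 180 -> 0 < Rtrigo_calc.sind (b - a).
Proof.
move=> h1 h2; apply/RltP; apply: sind_pos0.
- have h : 0 < b - a by rewrite subr_gt0.
  exact: (elimT RltP h).
- have e : (180%:R : R) = IZR (Zpos 180%positive) by rewrite -INRE INR_IZR_INZ.
  rewrite e in h2. exact: (elimT RltP h2).
Qed.

Lemma sp2 (a b : R) : 0 < a -> a < b -> b < 180 -> 0 < Rtrigo_calc.sind (b - a).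
Proof. move=> h0 h1 h2; apply: sp => //; lra. Qed.

Lemma hl1 (a b c d : R) : d != 0 -> a * - b + c * d = 0 -> c = a * (b / d).
Proof.
move=> hd h; rewrite -(mulfK hd c).
have -> : c * d = a * b.
  have : c * d - a * b = 0 :> R by rewrite -h; ring.
  by move/eqP; rewrite subr_eq0 => /eqP.
by rewrite mulrA.
Qed.

Lemma hl2 (a b c d : R) : d != 0 -> a * b + c * - d = 0 -> c = a * (b / d).
Proof.
move=> hd h; rewrite -(mulfK hd c).
have -> : c * d = a * b.
  have : a * b - c * d = 0 :> R by rewrite -h; ring.
  by move/eqP; rewrite subr_eq0 => /eqP ->.
by rewrite mulrA.
Qed.

Lemma hl3 (x0 b x6 c x7 e x8 d : R) : d != 0 ->
  x0 * b + (x6 * - c + (x7 * - e + x8 * - d)) = 0 ->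
  x8 = (x0 * b - x6 * c - x7 * e) / d.
Proof.
move=> hd h; rewrite -(mulfK hd x8).
congr (_ / d). symmetry.
have : (x0 * b - x6 * c - x7 * e) - x8 * d = 0 :> R by rewrite -h; ring.
by move/eqP; rewrite subr_eq0 => /eqP.
Qed.

Lemma sum9 (F : 'I_9 -> R) : \sum_(k < 9) F k =
  F (inord 0) + (F (inord 1) + (F (inord 2) + (F (inord 3) + (F (inord 4) +
  (F (inord 5) + (F (inord 6) + (F (inord 7) + (F (inord 8) + 0)))))))).
Proof.
rewrite (eq_bigr (fun k : 'I_9 => F (inord k))); last by move=> i _; rewrite inord_val.
rewrite -(big_mkord xpredT (fun k => F (inord k))).
by rewrite /index_iota /= !big_cons big_nil.
Qed.
Theorem mainTheorem4 (t1 t2 t3 t4 t5 t6 t7 t8 t9 t10 : R) :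
  (* 0 < θi < θj < θk < 180 for the listed triples (i,j,k) *)
  (0 < t2 < t4) && (t4 < t6 < 180) ->
  (0 < t1 < t5) && (t5 < t9 < 180) ->
  (0 < t1 < t5) && (t5 < t10 < 180) ->
  (0 < t1 < t5) && (t5 < t7 < 180) ->
  (0 < t1 < t3) && (t3 < t7 < 180) ->
  (0 < t1 < t4) && (t4 < t7 < 180) ->
  (0 < t3 < t5) && (t5 < t8 < 180) ->
  (0 < t2 < t8) && (t8 < t9 < 180) ->
  (0 < t6 < t7) && (t7 < t10 < 180) ->
  let s := fun a b : R => Rtrigo_calc.sind (b - a) in
  s t8 t9 * s t1 t10 * s t2 t4 * s t3 t5 * s t6 t7
  + s t4 t6 * s t1 t9 * s t7 t10 * s t3 t5 * s t2 t8
  - s t4 t6 * s t3 t8 * s t7 t10 * s t2 t9 * s t1 t5 < 0 ->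
  simplex (mx_of_rows
    [:: [:: 0; - s t5 t8; 0; s t3 t8; 0; - s t3 t5; 0; 0];
        [:: - s t8 t9; 0; 0; 0; 0; s t2 t9; - s t2 t8; 0];
        [:: s t4 t6; 0; - s t2 t6; 0; s t2 t4; 0; 0; 0];
        [:: 0; 0; 0; 0; - s t7 t10; 0; 0; - s t6 t7];
        [:: 0; s t1 t7; 0; 0; 0; 0; 0; 0];
        [:: 0; 0; s t1 t7; 0; 0; 0; 0; 0];
        [:: 0; 0; 0; - s t1 t9; 0; 0; s t1 t5; 0];
        [:: 0; 0; 0; - s t1 t10; 0; 0; 0; s t1 t5];
        [:: 0; 0; 0; - s t1 t7; 0; 0; 0; 0] ]).
Proof.
move=> H1 H2 H3 H4 H5 H6 H7 H8 H9 s E.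
case/andP: H1 => /andP[ha0 ha1] /andP[ha2 ha3].
case/andP: H2 => /andP[hb0 hb1] /andP[hb2 hb3].
case/andP: H3 => /andP[_ _] /andP[hc2 hc3].
case/andP: H4 => /andP[_ _] /andP[hd2 hd3].
case/andP: H5 => /andP[_ he1] /andP[he2 _].
case/andP: H6 => /andP[_ hf1] /andP[hf2 _].
case/andP: H7 => /andP[hg0 hg1] /andP[hg2 hg3].
case/andP: H8 => /andP[_ hh1] /andP[hh2 _].
case/andP: H9 => /andP[hi0 hi1] /andP[hi2 _].
have p58 : 0 < s t5 t8 by apply: sp2 (lt_trans hg0 hg1) hg2 hg3.
have p38 : 0 < s t3 t8 by apply: sp2 hg0 (lt_trans hg1 hg2) hg3.
have p35 : 0 < s t3 t5 by apply: sp2 hg0 hg1 (lt_trans hg2 hg3).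
have p89 : 0 < s t8 t9 by apply: sp2 (lt_trans ha0 hh1) hh2 hb3.
have p29 : 0 < s t2 t9 by apply: sp2 ha0 (lt_trans hh1 hh2) hb3.
have p28 : 0 < s t2 t8 by apply: sp2 ha0 hh1 hg3.
have p46 : 0 < s t4 t6 by apply: sp2 (lt_trans ha0 ha1) ha2 ha3.
have p26 : 0 < s t2 t6 by apply: sp2 ha0 (lt_trans ha1 ha2) ha3.
have p24 : 0 < s t2 t4 by apply: sp2 ha0 ha1 (lt_trans ha2 ha3).
have p710 : 0 < s t7 t10 by apply: sp2 (lt_trans hi0 hi1) hi2 hc3.
have p67 : 0 < s t6 t7 by apply: sp2 hi0 hi1 hd3.
have p17 : 0 < s t1 t7 by apply: sp2 hb0 (lt_trans hb1 hd2) hd3.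
have p19 : 0 < s t1 t9 by apply: sp2 hb0 (lt_trans hb1 hb2) hb3.
have p110 : 0 < s t1 t10 by apply: sp2 hb0 (lt_trans hb1 hc2) hc3.
have p15 : 0 < s t1 t5 by apply: sp2 hb0 hb1 (lt_trans hb2 hb3).
clearbody s.
move: E p58 p38 p35 p89 p29 p28 p46 p26 p24 p710 p67 p17 p19 p110 p15.
move: (s t5 t8) (s t3 t8) (s t3 t5) (s t8 t9) (s t2 t9) (s t2 t8) (s t4 t6)
  (s t2 t6) (s t2 t4) (s t7 t10) (s t6 t7) (s t1 t7) (s t1 t9) (s t1 t10) (s t1 t5).
move=> s58 s38 s35 s89 s29 s28 s46 s26 s24 s710 s67 s17 s19 s110 s15.
move=> E p58 p38 p35 p89 p29 p28 p46 p26 p24 p710 p67 p17 p19 p110 p15.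

have nz : forall x : R, 0 < x -> x != 0 by move=> x hx; exact: lt0r_neq0.
pose a2 := s35 / s29.
pose a3 := s89 * a2 / s46.
pose a4 := s24 * a3 / s710.
pose a5 := s58 / s17.
pose a6 := s26 * a3 / s17.
pose a7 := s28 * a2 / s15.
pose a8 := s67 * a4 / s15.
pose a9 := (s38 - s19 * a7 - s110 * a8) / s17.
have q2 : 0 < a2 by rewrite /a2 divr_gt0.
have q3 : 0 < a3 by rewrite /a3 divr_gt0 // mulr_gt0.
have q4 : 0 < a4 by rewrite /a4 divr_gt0 // mulr_gt0.
have q5 : 0 < a5 by rewrite /a5 divr_gt0.
have q6 : 0 < a6 by rewrite /a6 divr_gt0 // mulr_gt0.
have q7 : 0 < a7 by rewrite /a7 divr_gt0 // mulr_gt0.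
have q8 : 0 < a8 by rewrite /a8 divr_gt0 // mulr_gt0.
have key : s38 - s19 * a7 - s110 * a8 =
  - (s89 * s110 * s24 * s35 * s67 + s46 * s19 * s710 * s35 * s28 -
     s46 * s38 * s710 * s29 * s15) / (s15 * s29 * s46 * s710).
  rewrite /a8 /a7 /a4 /a3 /a2; field.
  by rewrite !nz.
have q9 : 0 < a9.
  apply: divr_gt0 => //; rewrite key; apply: divr_gt0.
    by rewrite oppr_gt0.
  by rewrite !mulr_gt0.
exists (\row_(i < 9) nth 0 [:: 1; a2; a3; a4; a5; a6; a7; a8; a9] i).
split; [|split].
{ move=> i; rewrite mxE.
  case: i => [[|[|[|[|[|[|[|[|[|//]]]]]]]]] Hi] //=. }
{ apply/rowP => j; rewrite !mxE sum9 !mxE !inordK //=.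
  case: j => [[|[|[|[|[|[|[|[|//]]]]]]]] Hj] /=.
  all: rewrite /a9 /a8 /a7 /a6 /a5 /a4 /a3 /a2; field; by rewrite ?nz. }
{ move=> m Hm.
  have eq k (Hk : (k < 8)%N) := congr1 (fun M : 'M[R]_(1,8) => M 0 (Ordinal Hk)) Hm.
  have e1 := eq 0%N isT; have e2 := eq 1%N isT; have e3 := eq 2%N isT;
  have e4 := eq 3%N isT; have e5 := eq 4%N isT; have e6 := eq 5%N isT;
  have e7 := eq 6%N isT; have e8 := eq 7%N isT.
  move: e1 e2 e3 e4 e5 e6 e7 e8; rewrite !mxE !sum9 !mxE !inordK //= ?mxE.
  rewrite !mulr0 !add0r !addr0.
  move=> e1 e2 e3 e4 e5 e6 e7 e8.
  have E2 := hl1 _ _ _ _ (nz _ p29) e6.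
  have E3 := hl1 _ _ _ _ (nz _ p46) e1.
  have E5 := hl1 _ _ _ _ (nz _ p17) e2.
  have E6 := hl1 _ _ _ _ (nz _ p17) e3.
  have E4 := hl2 _ _ _ _ (nz _ p710) e5.
  have E7 := hl1 _ _ _ _ (nz _ p15) e7.
  have E8 := hl1 _ _ _ _ (nz _ p15) e8.
  have E9 := hl3 _ _ _ _ _ _ _ _ (nz _ p17) e4.
  exists (m 0 (inord 0)).
  apply/rowP => i; rewrite !mxE -{1}(inord_val i).
  case: i => [[|[|[|[|[|[|[|[|[|//]]]]]]]]] Hi] /=.
  all: rewrite ?E9 ?E8 ?E7 ?E6 ?E5 ?E4 ?E3 ?E2.
  all: rewrite ?E9 ?E8 ?E7 ?E6 ?E5 ?E4 ?E3 ?E2.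
  all: rewrite ?E9 ?E8 ?E7 ?E6 ?E5 ?E4 ?E3 ?E2.
  all: rewrite /a9 /a8 /a7 /a6 /a5 /a4 /a3 /a2; field; by rewrite ?nz. }
Qed.
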